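(* Let $\mathcal S\subseteq\mathcal X\cup\mathcal Y\cup\mathcal Z$ be a set of items with $w_Z(\mathcal S)\le t-1$ and $p_Z(\mathcal S)\ge t-1$. Then there exists $i\in\{0,\dots,t-1\}$ such that $\mathcal S\cap\mathcal Z=\mathcal Z_i$.
   Context: Let $n\ge1$, $B_n=\sum_{j=1}^{3n}(3n+1)^j$, $\widetilde{\mathcal A}_n=\{(3n+1)^{j_1}+(3n+1)^{j_2}+(3n+1)^{j_3}: j_1,j_2,j_3\in\{1,\dots,3n\}\}$. Let $t$ be a power of two, $\lg$ the base-2 logarithm, and for $i\in\{0,\dots,t-1\}$ let $\mathcal A_i=\{a^i_1,\dots,a^i_{3n}\}$ be a set of $3n$ integers from $\widetilde{\mathcal A}_n$ with sum $3B_n$. Let $X=3tnB_n$, $B=B_n+nX$, $Y=3t^2nB$, $Z=(\lg t)^2Y^2 3^{(\lg t)^2}$, and fix a bijection $f:\{0,\dots,\lg t-1\}^2\to\{0,\dots,(\lg t)^2-1\}$. Items (weight $w$, profit $p$): encoding items $x^i_j$ ($0\le i\le t-1$, $1\le j\le 3n$) with $w=X+a^i_j$, $p=X+a^i_j+3iB$, forming $\mathcal X$; quadratization items forming $\mathcal Y$: for $0\le k<\ell\le\lg t-1$, $y^{1,0}_{k,\ell}$ with $w=p=3^{f(k,\ell)}Y$, $y^{0,1}_{k,\ell}$ with $w=p=3^{f(\ell,k)}Y$, $y^{1,1}_{k,\ell}$ with $w=(3^{f(k,\ell)}+3^{f(\ell,k)})Y$, $p=w+2^{k+\ell}\cdot9nB$,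 and for $0\le k\le\lg t-1$, $y^{1,1}_{k,k}$ with $w=3^{f(k,k)}Y$, $p=w+2^{2k}\cdot4.5nB+2^k\cdot1.5nB$; index items forming $\mathcal Z$: for $0\le k\le\lg t-1$, $z^0_k$ with $w=p=2^kZ+\sum_{\ell=0}^{\lg t-1}3^{f(k,\ell)}Y$ and $z^1_k$ with $w=p=2^kZ+2^k\cdot 3B$. For an item $x$, $w_Z(x)=\lfloor w(x)/Z\rfloor$ and $p_Z(x)=\lfloor p(x)/Z\rfloor$; for a set $\mathcal S$, $w_Z(\mathcal S)=\sum_{x\in\mathcal S}w_Z(x)$ and $p_Z(\mathcal S)=\sum_{x\in\mathcal S}p_Z(x)$. For $i\in\{0,\dots,t-1\}$ with binary digits $i(0),\dots,i(\lg t-1)$ (so $i=\sum_k i(k)2^k$), $\mathcal Z_i=\{z^{i(k)}_k: 0\le k\le\lg t-1\}$. *)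

(* Defs.v *)
From HB Require Import structures.
From mathcomp Require Import all_boot.
Set Implicit Arguments. Unset Strict Implicit. Unset Printing Implicit Defensive.

(* ItX i j    = x^i_j
   ItY10 k l  = y^{1,0}_{k,l}   (k < l)
   ItY01 k l  = y^{0,1}_{k,l}   (k < l)
   ItY11 k l  = y^{1,1}_{k,l}   (k <= l; k = l is the diagonal item y^{1,1}_{k,k})
   ItZ0 k     = z^0_k,  ItZ1 k = z^1_k *)
Inductive item :=
| ItX of nat & nat
| ItY10 of nat & nat
| ItY01 of nat & nat
| ItY11 of nat & nat
| ItZ0 of nat
| ItZ1 of nat.

Definition item_code (x : item) : nat * (nat * nat) :=
  match x with
  | ItX i j => (0, (i, j))
  | ItY10 k l => (1, (k, l))
  | ItY01 k l => (2, (k, l))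
  | ItY11 k l => (3, (k, l))
  | ItZ0 k => (4, (k, 0))
  | ItZ1 k => (5, (k, 0))
  end.

Definition item_decode (c : nat * (nat * nat)) : item :=
  match c with
  | (0, (i, j)) => ItX i j
  | (1, (k, l)) => ItY10 k l
  | (2, (k, l)) => ItY01 k l
  | (3, (k, l)) => ItY11 k l
  | (4, (k, _)) => ItZ0 k
  | (_, (k, _)) => ItZ1 k
  end.

Lemma item_codeK : cancel item_code item_decode.
Proof. by case. Qed.

HB.instance Definition _ := Equality.copy item (can_type item_codeK).

Section Construction.
(* n : the 3-partition parameter; L = lg t, i.e. t = 2^L;
   a i j = a^i_j; f : the bijection {0..L-1}^2 -> {0..L^2-1}. *)
Variables (n L : nat) (a : nat -> nat -> nat) (f : nat -> nat -> nat).

Definition tt_ := 2 ^ L.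

Definition Bn := \sum_(1 <= j < (3 * n).+1) (3 * n + 1) ^ j.

Definition in_Atilde (v : nat) : Prop :=
  exists j1 j2 j3, [/\ 1 <= j1 <= 3 * n, 1 <= j2 <= 3 * n, 1 <= j3 <= 3 * n &
    v = (3 * n + 1) ^ j1 + (3 * n + 1) ^ j2 + (3 * n + 1) ^ j3].

Definition Xc := 3 * tt_ * n * Bn.
Definition Bc := Bn + n * Xc.
Definition Yc := 3 * tt_ ^ 2 * n * Bc.
Definition Zc := L ^ 2 * Yc ^ 2 * 3 ^ (L ^ 2).

Definition valid_item (x : item) : bool :=
  match x with
  | ItX i j => (i < tt_) && (1 <= j <= 3 * n)
  | ItY10 k l => (k < l) && (l < L)
  | ItY01 k l => (k < l) && (l < L)
  | ItY11 k l => (k <= l) && (l < L)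
  | ItZ0 k => k < L
  | ItZ1 k => k < L
  end.

Definition is_Z_item (x : item) : bool :=
  match x with ItZ0 k | ItZ1 k => k < L | _ => false end.

Definition weight (x : item) : nat :=
  match x with
  | ItX i j => Xc + a i j
  | ItY10 k l => 3 ^ (f k l) * Yc
  | ItY01 k l => 3 ^ (f l k) * Yc
  | ItY11 k l => if k == l then 3 ^ (f k k) * Yc
                 else (3 ^ (f k l) + 3 ^ (f l k)) * Yc
  | ItZ0 k => 2 ^ k * Zc + \sum_(0 <= l < L) 3 ^ (f k l) * Yc
  | ItZ1 k => 2 ^ k * Zc + 2 ^ k * 3 * Bc
  end.

(* For the diagonal items, 2^(2k)*4.5nB + 2^k*1.5nB
   = (2^(2k)*9nB + 2^k*3nB)/2, which is always an integer. *)
Definition profit (x : item) : nat :=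
  match x with
  | ItX i j => Xc + a i j + 3 * i * Bc
  | ItY11 k l => if k == l
                 then weight x + (2 ^ (2 * k) * 9 * n * Bc + 2 ^ k * 3 * n * Bc) %/ 2
                 else weight x + 2 ^ (k + l) * 9 * n * Bc
  | _ => weight x
  end.

Definition wZ (x : item) : nat := weight x %/ Zc.
Definition pZ (x : item) : nat := profit x %/ Zc.
Definition wZ_set (S : seq item) : nat := \sum_(x <- S) wZ x.
Definition pZ_set (S : seq item) : nat := \sum_(x <- S) pZ x.

(* membership in Z_i = { z^{i(k)}_k : 0 <= k < L }, i(k) the k-th binary digit *)
Definition in_Zi (i : nat) (x : item) : bool :=
  match x with
  | ItZ0 k => (k < L) && ~~ odd (i %/ 2 ^ k)
  | ItZ1 k => (k < L) && odd (i %/ 2 ^ k)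
  | _ => false
  end.

End Construction.

(* Main.v *)
Require Import Defs.
From HB Require Import structures.
From mathcomp Require Import all_boot zify.

Lemma c_lemma L : forall c : nat -> nat, (forall k, k < L -> c k <= 2) ->
  \sum_(k < L) 2 ^ k * c k = 2 ^ L - 1 -> forall k, k < L -> c k = 1.
Proof.
elim: L => [|L IH] c hc hs k hk //.
rewrite big_ord_recl /= expn0 mul1n in hs.
have e : \sum_(i < L) 2 ^ (bump 0 i) * c (bump 0 i) = 2 * \sum_(i < L) 2 ^ i * c i.+1.
  rewrite big_distrr /=; apply: eq_bigr => i _; by rewrite /bump /= add1n expnS mulnA.
rewrite e in hs.
have hc0 := hc 0 isT.
have hT : 1 <= 2 ^ L by rewrite expn_gt0.
have hc1 : c 0 = 1 /\ \sum_(i < L) 2 ^ i * c i.+1 = 2 ^ L - 1.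
  move: hs; rewrite expnS; lia.
case: k hk => [|k] hk; first by case: hc1.
apply: (IH (fun i => c i.+1)) => //; first by move=> i hi; apply: hc.
by case: hc1.
Qed.

Definition num L (b : nat -> bool) := \sum_(k < L) 2 ^ k * b k.

Lemma num_bits L : forall b, num L b < 2 ^ L /\ forall k, k < L -> odd (num L b %/ 2 ^ k) = b k.
Proof.
elim: L => [|L IH] b; first by rewrite /num big_ord0.
have e : num L.+1 b = b 0 + 2 * num L (fun i => b i.+1).
  rewrite /num big_ord_recl /= expn0 mul1n big_distrr /=; congr (_ + _).
  apply: eq_bigr => i _; by rewrite /bump /= add1n expnS mulnA.
have [h1 h2] := IH (fun i => b i.+1).
split.
  rewrite e expnS; case: (b 0) => /=; lia.
case=> [|k] hk.
  by rewrite expn0 divn1 e oddD oddM /= addbF; case: (b 0).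
rewrite expnS divnMA e.
have -> : (b 0 + 2 * num L (fun i => b i.+1)) %/ 2 = num L (fun i => b i.+1).
  case: (b 0) => /=; lia.
by rewrite h2.
Qed.

Lemma sum_eq_count (S : seq item) y : \sum_(x <- S) (x == y) = count_mem y S.
Proof. elim: S => [|x S IH]; by rewrite ?big_nil ?big_cons ?IH. Qed.

Definition zv L (x : item) := \sum_(k < L) 2 ^ k * ((x == ItZ0 k) + (x == ItZ1 k)).

Lemma zv_Z0 L k : k < L -> zv L (ItZ0 k) = 2 ^ k.
Proof.
move=> hk; rewrite /zv (bigD1 (Ordinal hk)) //= eqxx.
rewrite big1 ?addn0 ?muln1 // => j hj.
have -> : (ItZ0 k == ItZ0 j) = false.
  apply/eqP => [[e]]; move: hj; rewrite -val_eqE /= e eqxx //.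
by rewrite addn0 muln0.
Qed.

Lemma zv_Z1 L k : k < L -> zv L (ItZ1 k) = 2 ^ k.
Proof.
move=> hk; rewrite /zv (bigD1 (Ordinal hk)) //= eqxx.
rewrite big1 ?addn0 ?muln1 // => j hj.
have -> : (ItZ1 k == ItZ1 j) = false.
  apply/eqP => [[e]]; move: hj; rewrite -val_eqE /= e eqxx //.
by rewrite muln0.
Qed.

Lemma zv_other L x : (match x with ItZ0 _ | ItZ1 _ => false | _ => true end) -> zv L x = 0.
Proof.
move=> hx; rewrite /zv big1 // => j _.
have -> : (x == ItZ0 j) = false by apply/eqP; move=> e; rewrite e in hx.
have -> : (x == ItZ1 j) = false by apply/eqP; move=> e; rewrite e in hx.
by rewrite muln0.
Qed.

Lemma aux9 t m b : t * t * 9 * m * b = 3 * (t * t * 3 * m * b).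
Proof. nia. Qed.

Lemma aux12 t m b : 2 <= t -> 1 <= m -> 1 <= b -> 12 <= 3 * (t * t) * m * b.
Proof. move=> h1 h2 h3; have h4 : 4 <= t * t by nia. nia. Qed.

Lemma aux_key L K Y : 0 < L -> 0 < K -> 7 < Y -> 7 * L * K * Y < L * L * (Y * Y) * K.
Proof.
move=> hL hK hY.
have hLL : L <= L * L := leq_pmulr L hL.
have h1 : 7 * L * K * Y <= 7 * (L * L) * K * Y.
  by rewrite leq_mul2r leq_mul2r leq_mul2l hLL !orbT.
apply: (leq_ltn_trans h1).
have -> : L * L * (Y * Y) * K = Y * (L * L) * K * Y by nia.
rewrite ltn_mul2r ltn_mul2r ltn_mul2r hY hK muln_gt0 hL /=.
lia.
Qed.

Lemma val_lemma n L a f (hn : 1 <= n)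
  (hA : forall i j, i < 2 ^ L -> 1 <= j <= 3 * n -> in_Atilde n (a i j))
  (hf_range : forall k l, k < L -> l < L -> f k l < L ^ 2)
  (hL : 0 < L) x (hx : valid_item n L x) :
  wZ n L a f x = zv L x /\ pZ n L a f x = zv L x.
Proof.
have hT2 : 2 <= tt_ L by rewrite /tt_ -{1}(expn1 2) leq_exp2l.
have hterm : forall j, 1 <= j <= 3 * n -> (3 * n + 1) ^ j <= Bn n.
  move=> j /andP [hj1 hj2]; rewrite /Bn big_nat_recr /=; last by lia.
  apply: leq_trans (leq_addl _ _); apply: leq_pexp2l => //; lia.
have hBn : 1 <= Bn n.
  apply: leq_trans (hterm 1 _); first by rewrite expn_gt0 addn1.
  apply/andP; split => //; lia.
have ha : forall i j, i < tt_ L -> 1 <= j <= 3 * n -> a i j <= 3 * Bn n.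
  move=> i j hi hj; have [j1 [j2 [j3 [h1 h2 h3 ->]]]] := hA i j hi hj.
  have := hterm _ h1; have := hterm _ h2; have := hterm _ h3; lia.
have hBc1 : Bn n <= Bc n L by rewrite /Bc leq_addr.
have hBc2 : Xc n L <= Bc n L.
  rewrite /Bc; apply: leq_trans (leq_addl _ _); apply: leq_pmull; lia.
have h2k : forall k, k < L -> 2 ^ k <= tt_ L.
  by move=> k hk; rewrite /tt_ leq_exp2l //; apply: ltnW.
have hK : 1 <= 3 ^ (L ^ 2) by rewrite expn_gt0.
have h3 : forall m, m < L ^ 2 -> 3 ^ m * Yc n L <= 3 ^ (L ^ 2) * Yc n L.
  move=> m hm; rewrite leq_mul2r; apply/orP; right; rewrite leq_exp2l //; exact: ltnW.
have hZ : Zc n L = L * L * (Yc n L * Yc n L) * 3 ^ (L ^ 2) by rewrite /Zc -(mulnn L) -(mulnn (Yc n L)).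
have hY : Yc n L = 3 * (tt_ L * tt_ L) * n * Bc n L by rewrite /Yc -(mulnn (tt_ L)).
case: x hx => [i j|k l|k l|k l|k|k] /= hx; rewrite /wZ /pZ /=.
all: move: hx hT2 ha hBc1 hBc2 h2k hK h3 hZ hY.
all: move: (tt_ L) (Bc n L) (Yc n L) (3 ^ (L ^ 2)) (Zc n L) => T B Y K Z.
all: move=> hx hT2 ha hBc1 hBc2 h2k hK h3 hZ hY.
all: have hB1 : 1 <= B by apply: leq_trans hBc1.
all: have hY3 : T * T * 3 * n * B = Y by rewrite hY (mulnC 3 (T * T)).
all: have hY9 : T * T * 9 * n * B = 3 * Y by rewrite -hY3 (aux9 T n B).
all: have hTT2 : T <= T * T by apply: leq_pmulr; apply: leq_trans hT2.
all: have hTT : T <= T * T * n by rewrite -mulnA; apply: leq_pmulr; rewrite muln_gt0 hn (leq_trans _ hT2).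
all: have hTB : 3 * T * B <= Y by have := leq_mul (leq_mul (leqnn 3) hTT) (leqnn B); rewrite hY !mulnA.
all: have hYbig : 12 <= Y by rewrite hY; apply: aux12.
all: have key : forall s, s <= 7 * L * K * Y -> s < Z by move=> s hs; rewrite hZ; apply: (leq_ltn_trans hs); apply: aux_key => //; exact: leq_trans _ hYbig.
all: clear hZ hY.
all: have hZ0 : 0 < Z by apply: key 0 _.
all: have dv : forall q s, s < Z -> (q * Z + s) %/ Z = q by move=> q s hs; rewrite divnMDl // divn_small // addn0.
all: have hLKY : K * Y <= L * K * Y by rewrite -[L * K * Y]mulnA; apply: leq_pmull.
all: have hYKY : Y <= K * Y by apply: leq_pmull.
all: have hBY : B <= Y by apply: leq_trans hTB; apply: leq_pmull; rewrite muln_gt0 (leq_trans _ hT2).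
{ move/and3P: hx => [hi hj1 hj2].
  have hai := ha i j hi (introT andP (conj hj1 hj2)).
  have hiT : 3 * i * B <= 3 * T * B by rewrite leq_mul2r leq_mul2l ltnW ?orbT.
  rewrite zv_other // !divn_small //; apply: key; lia. }
{ move/andP: hx => [hkl hl]; have hh := h3 (f k l) (hf_range k l (ltn_trans hkl hl) hl).
  rewrite zv_other // !divn_small //; apply: key; lia. }
{ move/andP: hx => [hkl hl]; have hh := h3 (f l k) (hf_range l k hl (ltn_trans hkl hl)).
  rewrite zv_other // !divn_small //; apply: key; lia. }
{ move/andP: hx => [hkl hl]; have hk : k < L by exact: leq_ltn_trans hkl hl.
  have e1 := h3 (f k l) (hf_range k l hk hl).
  have e2 := h3 (f l k) (hf_range l k hl hk).
  have e3 := h3 (f k k) (hf_range k k hk hk).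
  have e4 := h2k k hk; have e5 := h2k l hl.
  have e12 : (3 ^ f k l + 3 ^ f l k) * Y <= 2 * (K * Y).
    by rewrite mulnDl mul2n -addnn leq_add.
  have hd : (2 ^ (2 * k) * 9 * n * B + 2 ^ k * 3 * n * B) %/ 2 <=
      2 ^ (2 * k) * 9 * n * B + 2 ^ k * 3 * n * B by apply: leq_div.
  have hkk : 2 ^ (2 * k) <= T * T by rewrite mul2n -addnn expnD leq_mul.
  have hkk' : 2 ^ (2 * k) * 9 * n * B <= T * T * 9 * n * B.
    by rewrite !leq_mul2r hkk !orbT.
  have hk' : 2 ^ k * 3 * n * B <= T * T * 3 * n * B.
    by rewrite !leq_mul2r (leq_trans e4 hTT2) !orbT.
  have hkl2 : 2 ^ (k + l) <= T * T by rewrite expnD leq_mul.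
  have hkl' : 2 ^ (k + l) * 9 * n * B <= T * T * 9 * n * B.
    by rewrite !leq_mul2r hkl2 !orbT.
  rewrite zv_other //; case: eqP => _; split; apply: divn_small; apply: key; lia. }
{ have hs : \sum_(0 <= l < L) 3 ^ f k l * Y <= L * K * Y.
    have -> : L * K * Y = \sum_(0 <= l < L) K * Y by rewrite sum_nat_const_nat subn0 mulnA.
    rewrite big_nat [X in _ <= X]big_nat; apply: leq_sum => l /andP [_ hl].
    by rewrite h3 // hf_range.
  rewrite zv_Z0 // dv //; apply: key; lia. }
{ rewrite zv_Z1 //.
  have e : 2 ^ k * 3 * B <= 3 * T * B.
    by rewrite [3 * T]mulnC leq_mul2r leq_mul2r h2k ?orbT.
  rewrite dv //; apply: key; lia. }
Qed.

Theorem lemma5 (n L : nat) (a : nat -> nat -> nat) (f : nat -> nat -> nat)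
  (hn : 1 <= n)
  (hA : forall i j, i < 2 ^ L -> 1 <= j <= 3 * n -> in_Atilde n (a i j))
  (hAsum : forall i, i < 2 ^ L ->
     \sum_(1 <= j < (3 * n).+1) a i j = 3 * Bn n)
  (hf_range : forall k l, k < L -> l < L -> f k l < L ^ 2)
  (hf_inj : forall k l k' l', k < L -> l < L -> k' < L -> l' < L ->
     f k l = f k' l' -> k = k' /\ l = l')
  (hf_surj : forall m, m < L ^ 2 -> exists k l, [/\ k < L, l < L & f k l = m])
  (S : seq item)
  (hSuniq : uniq S)
  (hSvalid : all (valid_item n L) S)
  (hw : wZ_set n L a f S <= 2 ^ L - 1)
  (hp : 2 ^ L - 1 <= pZ_set n L a f S) :
  exists i, i < 2 ^ L /\
    forall x : item, (x \in S) && is_Z_item L x = in_Zi L i x.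
Proof.
case: (posnP L) => [L0|hL].
  subst L; exists 0; split => //; case=> * /=; by rewrite andbF.
have hw' : wZ_set n L a f S = \sum_(x <- S) zv L x.
  rewrite /wZ_set big_seq_cond [RHS]big_seq_cond; apply: eq_bigr => x /andP [hx _].
  exact: (@val_lemma n L a f hn hA hf_range hL x (allP hSvalid x hx)).1.
have hp' : pZ_set n L a f S = \sum_(x <- S) zv L x.
  rewrite /pZ_set big_seq_cond [RHS]big_seq_cond; apply: eq_bigr => x /andP [hx _].
  exact: (@val_lemma n L a f hn hA hf_range hL x (allP hSvalid x hx)).2.
have hcount : \sum_(x <- S) zv L x =
    \sum_(k < L) 2 ^ k * ((ItZ0 k \in S) + (ItZ1 k \in S)).
  rewrite /zv exchange_big /=; apply: eq_bigr => k _.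
  by rewrite -big_distrr /= big_split /= !sum_eq_count !count_uniq_mem.
have hc := @c_lemma L (fun k => (ItZ0 k \in S) + (ItZ1 k \in S)).
have hc1 : forall k, k < L -> (ItZ0 k \in S) + (ItZ1 k \in S) = 1.
  apply: hc.
    by move=> k _; case: (ItZ0 k \in S); case: (ItZ1 k \in S).
  rewrite -hcount; move: hw hp; rewrite hw' hp'; lia.
have [hnum hbits] := num_bits L (fun k => ItZ1 k \in S).
exists (num L (fun k => ItZ1 k \in S)); split => //.
case=> [i j|k l|k l|k l|k|k] /=; rewrite ?andbF //.
  case: (ltnP k L) => hk; last by rewrite andbF.
  rewrite andbT hbits //=; move: (hc1 k hk).
  by case: (ItZ0 k \in S); case: (ItZ1 k \in S).
case: (ltnP k L) => hk; last by rewrite andbF.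
by rewrite andbT hbits.
Qed.
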